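(* Let $\mathcal{X}=\mathbb{N}$, $\mathcal{Y}=\{0,1\}\times\{0,1\}^*$, and for $d\in\mathbb{N}$ and $A,B\in\{0,1\}^d$ let $h_{A,B}(x)=(0,A)$ if $(A\oplus B)(x\bmod d)=0$ and $h_{A,B}(x)=(1,B)$ if $(A\oplus B)(x\bmod d)=1$. Let $\mathcal{H}_{\mathrm{OTP}}=\{h_{A,B}: A,B\in\{0,1\}^*, |A|=|B|, A\oplus B\text{ balanced}\}$. Then every $h\in\mathcal{H}_{\mathrm{OTP}}$ satisfies $|\mathrm{im}(h)|\le 2$, and the map $h\mapsto\mathrm{im}(h)$ is injective on $\mathcal{H}_{\mathrm{OTP}}$.
   Context: $\{0,1\}^*$ denotes finite binary strings; $\oplus$ is entrywise XOR; positions of a length-$d$ string are indexed by residues modulo $d$; a string is balanced if it has equally many 0s and 1s. $\mathrm{im}(h)=\{h(x):x\in\mathcal{X}\}$. *)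

(* Defs.v *)
From mathcomp Require Import all_boot.
Set Implicit Arguments. Unset Strict Implicit. Unset Printing Implicit Defensive.

(* Output space Y = {0,1} x {0,1}^*, bits as bool (false = 0, true = 1). *)
Definition Y := (bool * seq bool)%type.

(* entrywise XOR of two binary strings (used only for equal lengths) *)
Definition xorb_seq (A B : seq bool) : seq bool :=
  [seq p.1 (+) p.2 | p <- zip A B].

Definition balanced (s : seq bool) : Prop := count id s = count negb s.

Definition hAB (A B : seq bool) (x : nat) : Y :=
  if nth false (xorb_seq A B) (x %% size A) then (true, B) else (false, A).

Definition H_OTP (h : nat -> Y) : Prop :=
  exists A B : seq bool,
    size A = size B /\ balanced (xorb_seq A B) /\ h = hAB A B.

Definition im (h : nat -> Y) : Y -> Prop := fun y => exists x, h x = y.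

(* Main.v *)
Require Import Defs.
From mathcomp Require Import all_boot.

Lemma size_xor A B : size A = size B -> size (xorb_seq A B) = size A.
Proof. by move=> e; rewrite /xorb_seq size_map size_zip e minnn. Qed.

Lemma has_b (b : bool) A B : size A = size B -> balanced (xorb_seq A B) -> 0 < size A ->
  exists x, nth false (xorb_seq A B) (x %% size A) = b.
Proof.
move=> e bal pos.
have hs : has (pred1 b) (xorb_seq A B).
  rewrite has_count; move: bal; rewrite /balanced => bal.
  have := count_predC id (xorb_seq A B).
  rewrite size_xor // -/(count negb _) => h.
  have -> : count (pred1 b) (xorb_seq A B) = if b then count id (xorb_seq A B) else count negb (xorb_seq A B).
    by case: b; apply: eq_count => z /=; case: z.
  rewrite lt0n; apply/eqP => h0.
  have [z1 z2] : count id (xorb_seq A B) = 0 /\ count negb (xorb_seq A B) = 0.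
    by case: b h0 => /= h0; split => //; rewrite ?bal // -bal.
  by move: pos; rewrite -h z1 z2.
move/hasP: hs => [y yin /eqP yt].
exists (index y (xorb_seq A B)).
rewrite modn_small; last by rewrite -(@size_xor A B e) index_mem.
by rewrite nth_index.
Qed.

Theorem lemma1 :
  (forall h : nat -> Y, H_OTP h ->
     exists s : seq Y, size s <= 2 /\ (forall y, im h y -> y \in s)) /\
  (forall h1 h2 : nat -> Y, H_OTP h1 -> H_OTP h2 -> im h1 = im h2 -> h1 = h2).
Proof.
split.
  move=> h [A [B [e [bal ->]]]].
  exists [:: (false, A); (true, B)]; split => // y [x <-].
  by rewrite /hAB; case: ifP; rewrite !inE eqxx ?orbT.
move=> h1 h2 [A1 [B1 [e1 [b1 ->]]]] [A2 [B2 [e2 [b2 ->]]]] him.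
have tr : forall y, im (hAB A1 B1) y -> im (hAB A2 B2) y by rewrite him.
have hA : A1 = A2.
  have [x0 hx0] : exists x, nth false (xorb_seq A1 B1) (x %% size A1) = false.
    case: (posnP (size A1)) => p; last exact: has_b.
    move/eqP: p; rewrite size_eq0 => /eqP ->; exists 0; by case: B1 {e1 b1 tr him}.
  have [x hx] : im (hAB A2 B2) (false, A1) by apply: tr; exists x0; rewrite /hAB hx0.
  by move: hx; rewrite /hAB; case: ifP => _ [].
subst A2.
have hB : B1 = B2.
  case: (posnP (size A1)) => p.
    by move: e1 e2; rewrite p; case: B1 {b1 tr him}; case: B2 {b2}.
  have [x0 hx0] := @has_b true A1 B1 e1 b1 p.
  have [x hx] : im (hAB A1 B2) (true, B1) by apply: tr; exists x0; rewrite /hAB hx0.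
  by move: hx; rewrite /hAB; case: ifP => _ [].
by subst B2.
Qed.
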